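(* Let $G$ be a connected graph with $\chi(G)=2$. If $P_\ell(G,2)\ge 1$, then $K_1\vee G$ is weakly enumeratively chromatic-choosable.
   Context: $K_1\vee G$ is the join: a new vertex adjacent to every vertex of $G$. For a list assignment $L$, $P(H,L)$ is the number of proper $L$-colorings of $H$; an $m$-assignment has all lists of size $m$; $P(H,m)$ is the chromatic polynomial, and the list color function $P_\ell(H,m)$ is the minimum of $P(H,L)$ over all $m$-assignments $L$. A graph $H$ is weakly enumeratively chromatic-choosable if $P_\ell(H,\chi(H))=P(H,\chi(H))$. *)

(* Defs.v *)
From mathcomp Require Import all_boot.
From Stdlib Require Import ClassicalEpsilon.
Set Implicit Arguments. Unset Strict Implicit. Unset Printing Implicit Defensive.

Section Graphs.
Variable T : finType.
Variable e : rel T.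

Definition simple_graph := symmetric e /\ irreflexive e.

Definition connected_graph := forall u v : T, connect e u v.

Definition chrom_poly (m : nat) : nat :=
  #|[set f : {ffun T -> 'I_m} | [forall u, forall v, e u v ==> (f u != f v)]]|.

(* chromatic number: least k admitting a proper k-colouring
   (for a loopless graph some k <= #|T| always works) *)
Definition chi : nat := find (fun k => 0 < chrom_poly k) (iota 0 #|T|.+1).

Definition m_assignment (m : nat) (L : T -> seq nat) :=
  forall v, uniq (L v) /\ size (L v) = m.

Definition col_bound (L : T -> seq nat) : nat := \max_(v : T) \max_(c <- L v) c.+1.

(* Colours are drawn from 'I_(col_bound L), which contains every colour of every list,
   so this counts exactly the proper L-colourings T -> nat. *)
Definition list_col_count (L : T -> seq nat) : nat :=
  #|[set f : {ffun T -> 'I_(col_bound L)} |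
       [forall v, val (f v) \in L v] &&
       [forall u, forall v, e u v ==> (f u != f v)]]|.

Definition attained (m n : nat) : bool :=
  if excluded_middle_informative
       (exists L : T -> seq nat, m_assignment m L /\ list_col_count L = n)
  then true else false.

Lemma attained_ex (m : nat) : exists n, attained m n.
Proof.
exists (list_col_count (fun _ => iota 0 m)).
rewrite /attained; case: excluded_middle_informative => // H; exfalso; apply: H.
exists (fun _ => iota 0 m); split => // v; by rewrite iota_uniq size_iota.
Qed.

Definition list_color_function (m : nat) : nat := ex_minn (attained_ex m).

End Graphs.

Definition join_K1 (T : finType) (e : rel T) : rel (option T) :=
  fun x y => match x, y with
             | Some u, Some v => e u v
             | None, Some _ | Some _, None => true
             | None, None => false
             end.

Definition weakly_enum_chrom_choosable (T : finType) (e : rel T) : Prop :=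
  list_color_function e (chi e) = chrom_poly e (chi e).

(* Main.v *)
Require Import Defs.
From mathcomp Require Import all_boot.
From mathcomp Require Import zify.
From Stdlib Require Import ClassicalEpsilon.
Set Implicit Arguments. Unset Strict Implicit. Unset Printing Implicit Defensive.

Definition cnt (U : finType) (r : rel U) (K : nat) (L : U -> seq nat) :=
  #|[set f : {ffun U -> 'I_K} | [forall v, val (f v) \in L v] &&
       [forall u, forall v, r u v ==> (f u != f v)]]|.

Definition goodc (U : finType) (r : rel U) (L : U -> seq nat) (g : {ffun U -> nat}) :=
  [forall v, g v \in L v] && [forall u, forall v, r u v ==> (g u != g v)].

Lemma cnt_ge (U : finType) (r : rel U) K L (s : seq {ffun U -> nat}) :
  0 < K -> (forall v c, c \in L v -> c < K) -> uniq s -> all (goodc r L) s ->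
  size s <= cnt r K L.
Proof.
case: K => // K _ HK us gs.
pose phi (g : {ffun U -> nat}) : {ffun U -> 'I_K.+1} := [ffun v => inord (g v)].
have phiV g v : goodc r L g -> val (phi g v) = g v.
  move=> /andP[/forallP H _]; rewrite ffunE /= inordK //; exact: HK (H v).
have inj : {in s &, injective phi}.
  move=> g1 g2 h1 h2 E; apply/ffunP => v.
  by rewrite -(phiV g1 v (allP gs g1 h1)) -(phiV g2 v (allP gs g2 h2)) E.
rewrite -(size_map phi) /cnt cardE.
apply: uniq_leq_size; first by rewrite map_inj_in_uniq.
move=> _ /mapP[g gin ->]; rewrite mem_enum inE.
have gg := allP gs g gin.
have := gg; case/andP => /forallP H1 /forallP H2.
apply/andP; split; apply/forallP => v; first by rewrite phiV.
apply/forallP => w; apply/implyP => rvw.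
have := implyP (forallP (H2 v) w) rvw.
by rewrite -(inj_eq val_inj) !phiV.
Qed.

Lemma col_bound_ok (U : finType) (L : U -> seq nat) v c : c \in L v -> c < col_bound L.
Proof.
move=> cin; rewrite /col_bound.
apply: (@leq_trans (\max_(c <- L v) c.+1)); last exact: (@leq_bigmax U (fun v => \max_(c <- L v) c.+1) v).
rewrite (big_rem c cin) /=; exact: leq_maxl.
Qed.

Lemma hyp2 (T : finType) (e : rel T) : 1 <= list_color_function e 2 ->
  forall M, m_assignment 2 M -> 0 < list_col_count e M.
Proof.
rewrite /list_color_function; case: ex_minnP => m _ Hmin H1 M HM.
apply: leq_trans H1 (Hmin _ _).
rewrite /attained; case: excluded_middle_informative => // H; exfalso; apply: H; by exists M.
Qed.

Lemma filt1 (s : seq nat) x : uniq s -> size s <= size [seq c <- s | c != x] + (x \in s).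
Proof.
elim: s => //= a s IH /andP[nas us]; rewrite in_cons.
case: (a =P x) => [ax|ax] /=.
  subst a; rewrite eqxx (negbTE nas) /=. have := IH us. rewrite (negbTE nas). lia.
have : (x == a) = false by apply/eqP => E; apply: ax.
move=> ->; have := IH us; lia.
Qed.

Lemma filt2 (s : seq nat) x y : uniq s ->
  size s <= size [seq c <- s | (c != x) && (c != y)] + (x \in s) + (y \in s).
Proof.
elim: s => //= a s IH /andP[nas us]; rewrite !in_cons.
have := IH us.
case: (a =P x) => [ax|ax]; case: (a =P y) => [ay|ay] /=.
- subst; rewrite eqxx (negbTE nas) /=; lia.
- subst; rewrite eqxx (negbTE nas) /=. have : (y == x) = false by apply/eqP => E; apply: ay.
  move=> ->; lia.
- subst; rewrite eqxx (negbTE nas) /=. have : (x == y) = false by apply/eqP => E; apply: ax.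
  move=> ->; lia.
- have : (x == a) = false by apply/eqP => E; apply: ax.
  have : (y == a) = false by apply/eqP => E; apply: ay.
  move=> -> ->; lia.
Qed.
Lemma col2 (T : finType) (e : rel T)
  (Hh : forall M, m_assignment 2 M -> 0 < list_col_count e M) (K : T -> seq nat) :
  (forall v, uniq (K v) /\ 1 < size (K v)) -> exists g, goodc e K g.
Proof.
move=> HK.
have HM : m_assignment 2 (fun v => take 2 (K v)).
  move=> v; have [u s] := HK v; split; first exact: take_uniq.
  by rewrite size_takel.
have := Hh _ HM; case/card_gt0P => f; rewrite inE => /andP[/forallP H1 /forallP H2].
exists [ffun v => val (f v)]; apply/andP; split; apply/forallP => v.
  rewrite ffunE; exact: mem_take (H1 v).
apply/forallP => w; apply/implyP => evw; rewrite !ffunE.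
have := implyP (forallP (H2 v) w) evw.
by rewrite -(inj_eq val_inj).
Qed.

Lemma col2two (T : finType) (e : rel T)
  (Hh : forall M, m_assignment 2 M -> 0 < list_col_count e M) (K : T -> seq nat) u :
  (forall v, uniq (K v) /\ 1 < size (K v)) -> 2 < size (K u) ->
  exists g1 g2, [/\ g1 != g2, goodc e K g1 & goodc e K g2].
Proof.
move=> HK Hu.
have [g1 G1] := col2 Hh HK.
have g1u : g1 u \in K u by case/andP: G1 => /forallP ->.
pose K' v := if v == u then rem (g1 u) (K u) else K v.
have HK' : forall v, uniq (K' v) /\ 1 < size (K' v).
  move=> v; rewrite /K'; case: (v =P u) => [E|_]; last exact: HK. subst v.
  have [uu _] := HK u; split; first exact: rem_uniq.
  rewrite size_rem //; move: Hu; case: (size (K u)) => [|n] //=.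
have [g2 G2] := col2 Hh HK'.
have g2u : g2 u \in K' u by case/andP: G2 => /forallP ->.
exists g1, g2; split => //.
  apply/eqP => E; move: g2u.
  by rewrite /K' eqxx (mem_rem_uniq _ (proj1 (HK u))) inE E eqxx.
case/andP: G2 => /forallP H1 H2; apply/andP; split => //; apply/forallP => v.
have := H1 v; rewrite /K'; case: (v =P u) => [E|_] //; subst v; exact: mem_rem.
Qed.

Definition Kx (T : finType) (L : T -> seq nat) x v := [seq c <- L v | c != x].
Definition in_all (T : finType) (L : T -> seq nat) y := [forall v, y \in L v].

Lemma side_case (T : finType) (e : rel T) (side : T -> bool)
  (Hs : forall u v, e u v -> side u != side v) (v0 : T) (L : T -> seq nat)
  (HL : forall v, uniq (L v) /\ size (L v) = 3) x y :
  y != x -> in_all L y ->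
  exists s, [/\ uniq s, all (goodc e (Kx L x)) s & (if in_all L x then 2 else 3) <= size s].
Proof.
move=> yx Hya; have Hy := forallP Hya.
pose F v := [seq c <- L v | (c != x) && (c != y)].
have F0 v : 0 < size (F v).
  have [u s] := HL v; have := filt2 x y u; rewrite s (Hy v) /F.
  case: (x \in L v); lia.
pose pick v := nth 0 (F v) 0.
have Fmem v i : i < size (F v) -> [/\ nth 0 (F v) i \in L v, nth 0 (F v) i != x & nth 0 (F v) i != y].
  move=> hi; have := mem_nth 0 hi; rewrite mem_filter => /andP[/andP[-> ->] ->]; by [].
pose gS sd (p : T -> nat) : {ffun T -> nat} := [ffun v => if side v == sd then y else p v].
have gSgood sd p : (forall v, [/\ p v \in L v, p v != x & p v != y]) -> goodc e (Kx L x) (gS sd p).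
  move=> Hp; apply/andP; split; apply/forallP => v.
    rewrite /Kx ffunE mem_filter; case: (side v == sd).
      by rewrite yx Hy.
    by have [? ? ?] := Hp v; apply/andP.
  apply/forallP => w; apply/implyP => evw; rewrite !ffunE.
  have [_ _ pv] := Hp v; have [_ _ pw] := Hp w.
  move: (Hs _ _ evw); case: (side v); case: (side w); case: sd => //= _;
    by rewrite // eq_sym.
have gSne sd p p' v : p v != y -> p' v != y -> gS sd p != gS (~~ sd) p'.
  move=> pv pv'; apply/eqP => /ffunP/(_ v); rewrite !ffunE.
  case: (side v); case: sd => //= E; by move: pv pv'; rewrite E eqxx // => /negP.
have pickP v : [/\ pick v \in L v, pick v != x & pick v != y] by apply: Fmem.
have pickne v : pick v != y by have [] := pickP v.
case Ex: (in_all L x).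
  exists [:: gS true pick; gS false pick]; split => //=.
    by rewrite inE andbT (gSne true pick pick v0).
  by rewrite !gSgood.
move/negbT/forallPn: Ex => [u0 Hu0].
have F2 : 1 < size (F u0).
  have [u s] := HL u0; have := filt2 x y u; rewrite s (Hy u0) /F (negbTE Hu0).
  lia.
pose p' v := if v == u0 then nth 0 (F u0) 1 else pick v.
have p'P v : [/\ p' v \in L v, p' v != x & p' v != y].
  rewrite /p'; case: (v =P u0) => [->|_]; last exact: pickP.
  exact: Fmem.
have p'ne v : p' v != y by have [] := p'P v.
pose sd := ~~ side u0.
exists [:: gS sd pick; gS sd p'; gS (~~ sd) pick]; split => //=.
  rewrite !inE !negb_or (gSne sd pick pick u0) // (gSne sd p' pick u0) // /= !andbT.
  apply/eqP => /ffunP/(_ u0); rewrite !ffunE /sd /p' eqxx.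
  case: (side u0) => /=; apply/eqP.
  - rewrite /pick nth_uniq //; first by apply: filter_uniq; case: (HL u0).
  - rewrite /pick nth_uniq //; first by apply: filter_uniq; case: (HL u0).
by rewrite !gSgood.
Qed.

Lemma perx (T : finType) (e : rel T)
  (Hh : forall M, m_assignment 2 M -> 0 < list_col_count e M)
  (side : T -> bool) (Hs : forall u v, e u v -> side u != side v) (v0 : T)
  (L : T -> seq nat) (HL : forall v, uniq (L v) /\ size (L v) = 3) x y z :
  x != y -> x != z ->
  exists s, [/\ uniq s, all (goodc e (Kx L x)) s &
   (if in_all L y || in_all L z then (if in_all L x then 2 else 3)
    else (if in_all L x then 1 else 2)) <= size s].
Proof.
move=> xy xz.
case Ey: (in_all L y) => /=.
  have yx : y != x by rewrite eq_sym.
  exact (side_case Hs v0 HL yx Ey).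
case Ez: (in_all L z) => /=.
  have zx : z != x by rewrite eq_sym.
  exact (side_case Hs v0 HL zx Ez).
have HK : forall v, uniq (Kx L x v) /\ 1 < size (Kx L x v).
  move=> v; have [u s] := HL v; split; first exact: filter_uniq.
  have := filt1 x u; rewrite s /Kx; case: (x \in L v); lia.
case Ex: (in_all L x).
  have [g G] := col2 Hh HK; exists [:: g]; split => //=; by rewrite G.
move/negbT/forallPn: Ex => [u0 Hu0].
have H3 : 2 < size (Kx L x u0).
  have [u s] := HL u0; have := filt1 x u; rewrite s /Kx (negbTE Hu0); lia.
have [g1 [g2 [ne G1 G2]]] := col2two Hh HK H3.
exists [:: g1; g2]; split => //=; by rewrite ?inE ?G1 ?G2 ?ne.
Qed.

Definition extH (T : finType) (x : nat) (g : {ffun T -> nat}) : {ffun option T -> nat} :=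
  [ffun o => if o is Some v then g v else x].

Lemma extH_inj (T : finType) x : injective (@extH T x).
Proof.
move=> g1 g2 E; apply/ffunP => v.
by have := congr1 (fun f : {ffun option T -> nat} => f (Some v)) E; rewrite !ffunE.
Qed.

Lemma extH_None (T : finType) x (s : seq {ffun T -> nat}) f :
  f \in map (extH x) s -> f None = x.
Proof. by case/mapP => g _ ->; rewrite ffunE. Qed.

Lemma extH_good (T : finType) (e : rel T) (LH : option T -> seq nat) x g :
  x \in LH None -> goodc e (Kx (fun v => LH (Some v)) x) g ->
  goodc (join_K1 e) LH (extH x g).
Proof.
move=> xin /andP[/forallP H1 /forallP H2]; apply/andP; split; apply/forallP.
  case=> [v|]; rewrite ffunE //.
  by have := H1 v; rewrite /Kx mem_filter => /andP[_ ->].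
case=> [u|]; apply/forallP; case=> [v|]; rewrite /= ?ffunE //=.
- exact: (forallP (H2 u) v).
- by have := H1 u; rewrite /Kx mem_filter => /andP[-> _].
- by have := H1 v; rewrite /Kx mem_filter => /andP[? _]; rewrite eq_sym.
Qed.

Lemma disjH (T : finType) x (s t : seq {ffun option T -> nat}) :
  (forall f, f \in t -> f None = x) -> (forall f, f \in s -> f None != x) ->
  ~~ has (mem t) s.
Proof.
move=> H1 H2; apply/hasPn => f fs; apply/negP => ft.
by have := H2 f fs; rewrite H1 // eqxx.
Qed.

Lemma LB (T : finType) (e : rel T)
  (Hh : forall M, m_assignment 2 M -> 0 < list_col_count e M)
  (side : T -> bool) (Hs : forall u v, e u v -> side u != side v) (v0 : T)
  K (LH : option T -> seq nat) :
  m_assignment 3 LH -> 0 < K -> (forall o c, c \in LH o -> c < K) ->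
  6 <= cnt (join_K1 e) K LH.
Proof.
move=> HL K0 HK.
have HLG : forall v, uniq (LH (Some v)) /\ size (LH (Some v)) = 3 by move=> v; exact: HL (Some v).
have [uN sN] := HL None.
have memN y : y \in LH None -> y \in LH None by [].
move: uN sN memN; case E: (LH None) => [|a [|b [|c [|d l]]]] //= U _ _.
move: U; rewrite !inE !negb_or => /andP[/andP[ab ac] /andP[bc _]].
have ba : b != a by rewrite eq_sym.
have ca : c != a by rewrite eq_sym.
have cb : c != b by rewrite eq_sym.
have [sa [ua ga ha]] := perx Hh Hs v0 HLG ab ac.
have [sb [ub gb hb]] := perx Hh Hs v0 HLG ba bc.
have [sc [uc gc hc]] := perx Hh Hs v0 HLG ca cb.
pose S := map (extH a) sa ++ map (extH b) sb ++ map (extH c) sc.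
apply: leq_trans (cnt_ge K0 HK (s := S) _ _).
- rewrite !size_cat !size_map.
  move: ha hb hc.
  case: (in_all (fun v => LH (Some v)) a); case: (in_all (fun v => LH (Some v)) b);
    case: (in_all (fun v => LH (Some v)) c) => /=; lia.
- rewrite !cat_uniq !(map_inj_uniq (@extH_inj T _)) ua ub uc /= !andbT.
  apply/andP; split.
    apply: disjH => f; first exact: extH_None.
    by rewrite mem_cat => /orP[] /extH_None ->.
  apply: disjH => f; first exact: extH_None.
  by move/extH_None ->.
- rewrite !all_cat !all_map; apply/and3P; split; apply/allP => g gin /=;
    apply: extH_good; rewrite ?E ?inE ?eqxx ?orbT //.
  + exact: (allP ga g gin).
  + exact: (allP gb g gin).
  + exact: (allP gc g gin).
Qed.
Lemma card6 : #|[set p : 'I_3 * 'I_3 | p.1 != p.2]| = 6.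
Proof.
have E : [set p : 'I_3 * 'I_3 | p.1 != p.2] = ~: [set (i, i) | i : 'I_3].
  apply/setP => [[i j]]; rewrite !inE /=; congr negb; apply/eqP/imsetP => [->|[k _ [-> ->]]] //.
  by exists j.
have := cardsC [set (i, i) | i : 'I_3]; rewrite -E card_imset; last by move=> i j [].
rewrite card_prod !card_ord. lia.
Qed.


Lemma UB (T : finType) (e : rel T) (conn : connected_graph e) (r0 : T) K
  (LH : option T -> seq nat) :
  (forall o c, c \in LH o -> c < 3) -> cnt (join_K1 e) K LH <= 6.
Proof.
move=> H3.
rewrite /cnt; set A := [set f : {ffun option T -> 'I_K} | _].
pose phi (f : {ffun option T -> 'I_K}) : 'I_3 * 'I_3 :=
  (inord (val (f None)), inord (val (f (Some r0)))).
have lt3 f o : f \in A -> val (f o) < 3.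
  by rewrite inE => /andP[/forallP M _]; apply: H3 (M o).
have ne f a b : f \in A -> join_K1 e a b -> val (f a) <> val (f b).
  rewrite inE => /andP[_ /forallP P] jab E.
  by have := implyP (forallP (P a) b) jab; rewrite -(inj_eq val_inj) E eqxx.
have key : {in A &, injective phi}.
  move=> f1 f2 A1 A2 E.
  have vN : val (f1 None) = val (f2 None).
    have := congr1 (fun p : 'I_3 * 'I_3 => val p.1) E; rewrite /= !inordK //.
    - by have := lt3 f2 None A2.
    - by have := lt3 f1 None A1.
  have step u v : e u v -> val (f1 (Some u)) = val (f2 (Some u)) ->
      val (f1 (Some v)) = val (f2 (Some v)).
    move=> euv Eu.
    have h1 := ne f1 _ _ A1 (isT : join_K1 e None (Some u)).
    have h2 := ne f1 _ _ A1 (isT : join_K1 e None (Some v)).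
    have h3 := ne f1 (Some u) (Some v) A1 euv.
    have h4 := ne f2 _ _ A2 (isT : join_K1 e None (Some u)).
    have h5 := ne f2 _ _ A2 (isT : join_K1 e None (Some v)).
    have h6 := ne f2 (Some u) (Some v) A2 euv.
    have := lt3 f1 (Some u) A1; have := lt3 f1 (Some v) A1; have := lt3 f1 None A1.
    have := lt3 f2 (Some u) A2; have := lt3 f2 (Some v) A2; have := lt3 f2 None A2.
    lia.
  have root : val (f1 (Some r0)) = val (f2 (Some r0)).
    have := congr1 (fun p : 'I_3 * 'I_3 => val p.2) E; rewrite /= !inordK //.
    - by have := lt3 f2 (Some r0) A2.
    - by have := lt3 f1 (Some r0) A1.
  have all_v v : val (f1 (Some v)) = val (f2 (Some v)).
    have gen : forall p x, val (f1 (Some x)) = val (f2 (Some x)) -> path e x p ->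
        val (f1 (Some (last x p))) = val (f2 (Some (last x p))).
      elim=> //= y p IH x Hx /andP[exy pp].
      exact: IH (step _ _ exy Hx) pp.
    have /connectP [p pp ->] := conn r0 v.
    exact: gen.
  apply/ffunP; case=> [v|]; apply: val_inj; [exact: all_v | exact: vN].
rewrite -(card_in_imset key).
apply: (@leq_trans #|[set p : 'I_3 * 'I_3 | p.1 != p.2]|); last by rewrite card6.
apply: subset_leq_card; apply/subsetP => _ /imsetP[f fA ->]; rewrite inE /=.
rewrite -(inj_eq val_inj) /= !inordK; first by apply/eqP; apply: (ne f _ _ fA).
- by have := lt3 f (Some r0) fA.
- by have := lt3 f None fA.
Qed.

Lemma cpH_small (T : finType) (e : rel T) u v k : e u v -> k < 3 ->
  chrom_poly (join_K1 e) k = 0.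
Proof.
move=> euv k3; apply/eqP; rewrite cards_eq0; apply/eqP/setP => f; rewrite !inE.
apply/negbTE/negP => /forallP P.
have ne a b : join_K1 e a b -> val (f a) <> val (f b).
  move=> jab E; have := implyP (forallP (P a) b) jab.
  by rewrite -(inj_eq val_inj) E eqxx.
have h1 : (nat_of_ord (f None) <> nat_of_ord (f (Some u)) :> nat) by apply: ne.
have h2 : (nat_of_ord (f None) <> nat_of_ord (f (Some v)) :> nat) by apply: ne.
have h3 : (nat_of_ord (f (Some u)) <> nat_of_ord (f (Some v)) :> nat) by apply: ne.
have l1 : (nat_of_ord (f None) < k)%N by apply: ltn_ord.
have l2 : (nat_of_ord (f (Some u)) < k)%N by apply: ltn_ord.
have l3 : (nat_of_ord (f (Some v)) < k)%N by apply: ltn_ord.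
lia.
Qed.

Theorem proposition27 (T : finType) (e : rel T) :
  simple_graph e -> connected_graph e -> chi e = 2 ->
  1 <= list_color_function e 2 ->
  weakly_enum_chrom_choosable (join_K1 e).
Proof.
move=> [esym eirr] conn chi2 H1.
have Hh := hyp2 H1.
pose p k := 0 < chrom_poly e k.
have fs : find p (iota 0 #|T|.+1) = 2 := chi2.
have T1 : 1 < #|T|.+1.
  have := find_size p (iota 0 #|T|.+1); rewrite fs size_iota; lia.
have cp1 : chrom_poly e 1 = 0.
  have h := @before_find _ 0 p (iota 0 #|T|.+1) 1.
  rewrite fs nth_iota // in h; have := h isT; rewrite /p /=.
  by case: (chrom_poly e 1).
have [u1 [v1 euv]] : exists u v, e u v.
  case: (boolP [exists u, exists v, e u v]).
    by move/existsP => [u /existsP [v h]]; exists u, v.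
  move=> /existsPn H; exfalso; move: cp1; apply/eqP; rewrite -lt0n.
  apply/card_gt0P; exists [ffun _ => ord0]; rewrite inE.
  apply/forallP => u; apply/forallP => v; apply/implyP => euv.
  by have := existsPn (H u) v; rewrite euv.
have uv : u1 != v1 by apply/eqP => E; move: euv; rewrite E eirr.
have T2 : 2 <= #|T|.
  have := max_card [set u1; v1]; rewrite cards2 uv; by [].
have cp2 : 0 < chrom_poly e 2.
  have hs : has p (iota 0 #|T|.+1) by rewrite has_find fs size_iota; lia.
  by have := nth_find 0 hs; rewrite fs nth_iota //; lia.
have [side Hs] : exists side : T -> bool, forall u v, e u v -> side u != side v.
  case/card_gt0P: cp2 => f; rewrite inE => /forallP Pf.
  exists (fun v => val (f v) == 0) => u v euv0.
  have := implyP (forallP (Pf u) v) euv0; rewrite -(inj_eq val_inj).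
  by case: (f u) => [[|[|a]] ?]; case: (f v) => [[|[|b]] ?].
have HLc : m_assignment 3 (fun _ : option T => iota 0 3).
  by move=> v; rewrite iota_uniq size_iota.
have HLc3 : forall (o : option T) c, c \in iota 0 3 -> c < 3.
  by move=> o c; rewrite mem_iota.
have CP : chrom_poly (join_K1 e) 3 = 6.
  have -> : chrom_poly (join_K1 e) 3 = cnt (join_K1 e) 3 (fun _ => iota 0 3).
    apply: eq_card => f; rewrite !inE.
    have -> : [forall v, val (f v) \in iota 0 3] by apply/forallP => v; rewrite mem_iota /=.
    by [].
  apply/eqP; rewrite eqn_leq (UB conn u1 _ HLc3) /=.
  exact: (LB Hh Hs u1 HLc).
have chiH : chi (join_K1 e) = 3.
  rewrite /chi card_option.
  move: T2; case: #|T| => [|[|n]] // _.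
  rewrite /= (cpH_small (k := 0) euv) // (cpH_small (k := 1) euv) //.
  by rewrite (cpH_small (k := 2) euv) // CP.
have LCF : list_color_function (join_K1 e) 3 = 6.
  rewrite /list_color_function; case: ex_minnP => m Hm Hmin.
  apply/eqP; rewrite eqn_leq; apply/andP; split.
    apply: leq_trans (Hmin (list_col_count (join_K1 e) (fun _ => iota 0 3)) _) _.
      rewrite /attained; case: excluded_middle_informative => // H; exfalso; apply: H.
      by exists (fun _ => iota 0 3).
    exact: (UB conn u1 _ HLc3).
  move: Hm; rewrite /attained; case: excluded_middle_informative => // [[L [HL EL]]] _; rewrite -EL.
  apply: (LB Hh Hs u1 HL).
    have [_ sN] := HL None.
    move: sN; case E: (L None) => [|c l] // _.
    have := @col_bound_ok _ L None c; rewrite E inE eqxx => /(_ isT); lia.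
  by move=> o c; apply: col_bound_ok.
by rewrite /weakly_enum_chrom_choosable chiH LCF CP.
Qed.
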